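(* Let $L$ be a lattice diagram with $n$ cells $(p_1,q_1)<\dots<(p_n,q_n)$, listed in the order described below, and let $k\ge1$ be an integer. Then $$e_k(\partial X)\,\Delta_L(X,Y)=\sum_{1\le i_1<\dots<i_k\le n}\epsilon\big(L,e_k(i_1,\dots,i_k;L)\big)\,\Delta_{e_k(i_1,\dots,i_k;L)}(X,Y).$$ Here $e_k(i_1,\dots,i_k;L)$ is the diagram obtained from $L$ by replacing the biexponents $(p_{i_1},q_{i_1}),\dots,(p_{i_k},q_{i_k})$ by $(p_{i_1}-1,q_{i_1}),\dots,(p_{i_k}-1,q_{i_k})$ and keeping the others unchanged. For each term with $\Delta_{e_k(i_1,\dots,i_k;L)}\neq0$, the coefficient $\epsilon(L,e_k(i_1,\dots,i_k;L))$ is a positive integer, namely $\epsilon(L,L')=\prod_{t=1}^n p_t!\,q_t!\big/\prod_{t=1}^n p'_t!\,q'_t!$, where $(p'_t,q'_t)$ are the biexponents of $L'$.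
   Context: A lattice diagram is a finite subset of $\mathbb{N}\times\mathbb{N}$. Its cells $(p,q)$ are listed in the order where $(p,q)<(p',q')$ iff $q<q'$, or $q=q'$ and $p<p'$. For such a list $(p_1,q_1),\dots,(p_n,q_n)$, $\Delta_L(X,Y)=\det(x_r^{p_t}y_r^{q_t})_{1\le r,t\le n}$ with $X=(x_1,\dots,x_n)$ and $Y=(y_1,\dots,y_n)$. This determinant is zero when two biexponents coincide. A term involving a negative exponent is understood to be zero, since its coefficient vanishes. The function $e_k$ is the $k$-th elementary symmetric function, and $e_k(\partial X)$ is obtained from it by substituting $\partial/\partial x_r$ for $x_r$. *)

(* Defs.v *)
From HB Require Import structures.
From mathcomp Require Import all_boot all_order all_algebra.
From mathcomp Require Import mpoly.
Set Implicit Arguments. Unset Strict Implicit. Unset Printing Implicit Defensive.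
Import Order.TTheory GRing.Theory Num.Theory.
Local Open Scope ring_scope.

Definition cell_lt (c c' : nat * nat) : bool :=
  ((c.2 < c'.2) || ((c.2 == c'.2) && (c.1 < c'.1)))%N.

Definition listed_in_order (n : nat) (c : 'I_n -> nat * nat) : Prop :=
  forall s t : 'I_n, (s < t)%N -> cell_lt (c s) (c t).

(* Variables: x_r is 'X_(lshift n r), y_r is 'X_(rshift n r) in {mpoly rat[n+n]}. *)
Definition xvar (n : nat) (r : 'I_n) : 'I_(n + n) := lshift n r.
Definition yvar (n : nat) (r : 'I_n) : 'I_(n + n) := rshift n r.

Definition Delta (n : nat) (c : 'I_n -> nat * nat) : {mpoly rat[n + n]} :=
  \det (\matrix_(r < n, t < n)
          ('X_(xvar r) ^+ (c t).1 * 'X_(yvar r) ^+ (c t).2)).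

Definition dX_prod (n : nat) (S : {set 'I_n}) (P : {mpoly rat[n + n]})
  : {mpoly rat[n + n]} :=
  foldr (fun r Q => mderiv (xvar r) Q) P (enum S).

Definition ek_dX (n k : nat) (P : {mpoly rat[n + n]}) : {mpoly rat[n + n]} :=
  \sum_(S : {set 'I_n} | #|S| == k) dX_prod S P.

(* e_k(i_1,...,i_k; L): biexponents at positions in I get p decremented.
   Only meaningful when p_i >= 1 for all i in I (guarded below). *)
Definition ek_diag (n : nat) (I : {set 'I_n}) (c : 'I_n -> nat * nat)
  : 'I_n -> nat * nat :=
  fun t => if t \in I then ((c t).1.-1, (c t).2) else c t.

Definition ek_defined (n : nat) (I : {set 'I_n}) (c : 'I_n -> nat * nat) : bool :=
  [forall i in I, (0 < (c i).1)%N].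

Definition fact_prod (n : nat) (c : 'I_n -> nat * nat) : nat :=
  \prod_(t < n) (factorial (c t).1 * factorial (c t).2)%N.

Definition eps (n : nat) (c c' : 'I_n -> nat * nat) : rat :=
  (fact_prod c)%:R / (fact_prod c')%:R.

(* Main.v *)
Require Import Defs.
From HB Require Import structures.
From mathcomp Require Import all_boot all_order all_algebra.
From mathcomp Require Import fingroup perm.
From mathcomp Require Import mpoly.
Import Order.TTheory GRing.Theory Num.Theory.
Set Implicit Arguments. Unset Strict Implicit. Unset Printing Implicit Defensive.
Local Open Scope ring_scope.

Definition mon (n : nat) (a b : 'I_n -> nat) : 'X_{1..n+n} :=
  [multinom (match split j with inl r => a r | inr r => b r end) | j < n + n].

Lemma split_l n (r : 'I_n) : split (lshift n r) = inl r.
Proof. exact: (unsplitK (inl _ r)). Qed.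
Lemma split_r n (r : 'I_n) : split (rshift n r) = inr r.
Proof. exact: (unsplitK (inr _ r)). Qed.

Lemma monE_x n (a b : 'I_n -> nat) r : mon a b (xvar r) = a r.
Proof. by rewrite /mon mnmE /xvar /= (split_l r). Qed.
Lemma monE_y n (a b : 'I_n -> nat) r : mon a b (yvar r) = b r.
Proof. by rewrite /mon mnmE /yvar /= (split_r r). Qed.

Lemma mon_ext n (a b a' b' : 'I_n -> nat) :
  (forall r, a r = a' r) -> (forall r, b r = b' r) -> mon a b = mon a' b'.
Proof.
move=> ha hb; apply/mnmP => j; rewrite !mnmE.
by case: (split j) => r; [exact: ha | exact: hb].
Qed.

Lemma prodX n (a b : 'I_n -> nat) :
  \prod_(r < n) ('X_(xvar r) ^+ a r * 'X_(yvar r) ^+ b r)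
    = 'X_[mon a b] :> {mpoly rat[n + n]}.
Proof.
rewrite mpolyXE_id big_split_ord /= -big_split /=.
by apply: eq_bigr => r _; rewrite -/(xvar r) -/(yvar r) monE_x monE_y.
Qed.

Definition decr n (s : seq 'I_n) (a : 'I_n -> nat) :=
  fun r => if r \in s then (a r).-1 else a r.

Lemma mderiv_mon n (a b : 'I_n -> nat) r0 :
  mderiv (xvar r0) ('X_[mon a b] : {mpoly rat[n + n]})
  = (a r0)%:R *: 'X_[mon (decr [:: r0] a) b].
Proof.
rewrite mderivX monE_x; congr (_ *: mpolyX _ _); apply/mnmP => j.
rewrite mnmBE mnm1E !mnmE /xvar; case: (split_ordP j) => r ->.
  rewrite /decr inE (inj_eq (@lshift_inj _ _)) eq_sym.
  by case: (r == r0); rewrite ?subn1 ?subn0.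
by rewrite eq_lrshift subn0.
Qed.

Definition fd n (s : seq 'I_n) (P : {mpoly rat[n + n]}) :=
  foldr (fun r Q => mderiv (xvar r) Q) P s.

Lemma fold_mon n (s : seq 'I_n) a b : uniq s ->
  fd s 'X_[mon a b] = (\prod_(r <- s) ((a r)%:R : rat)) *: 'X_[mon (decr s a) b].
Proof.
elim: s => [|r s IH] /=.
  by rewrite big_nil scale1r; by rewrite (@mon_ext _ (decr [::] a) b a b).
case/andP => rs us; rewrite /fd /= -/(fd s _) IH // mderivZ mderiv_mon big_cons scalerA.
congr (_ *: mpolyX _ _).
  by rewrite /decr (negbTE rs) mulrC.
apply: mon_ext => // t; rewrite /decr !inE; case: (t =P r) => [->|] //=.
by rewrite (negbTE rs).
Qed.

Lemma fd_sum n (s : seq 'I_n) (I : finType) (F : I -> {mpoly rat[n + n]}) :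
  fd s (\sum_i F i) = \sum_i fd s (F i).
Proof. by elim: s => //= r s IH; rewrite /fd /= -/(fd s _) IH raddf_sum. Qed.

Lemma fd_scale n (s : seq 'I_n) (x : rat) P : fd s (x *: P) = x *: fd s P.
Proof. by elim: s => //= r s IH; rewrite /fd /= -/(fd s _) IH mderivZ. Qed.

Lemma signE n (b : bool) (P : {mpoly rat[n + n]}) :
  (-1) ^+ b * P = ((-1) ^+ b : rat) *: P.
Proof. by case: b; rewrite /= ?expr0 ?expr1 ?mul1r ?scale1r ?mulN1r ?scaleN1r. Qed.

Definition D n (c : 'I_n -> nat * nat) (s : 'S_n) : {mpoly rat[n + n]} :=
  'X_[mon (fun r => (c (s r)).1) (fun r => (c (s r)).2)].

Lemma DeltaE n (c : 'I_n -> nat * nat) :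
  Delta c = \sum_(s : 'S_n) ((-1) ^+ s : rat) *: D c s.
Proof.
rewrite /Delta /determinant; apply: eq_bigr => s _; rewrite signE /D -prodX.
by congr (_ *: _); apply: eq_bigr => r _; rewrite mxE.
Qed.

Lemma dX_D n (c : 'I_n -> nat * nat) (S : {set 'I_n}) s :
  dX_prod S (D c s) =
  (\prod_(r in S) (((c (s r)).1)%:R : rat)) *: D (ek_diag [set s x | x in S] c) s.
Proof.
rewrite /dX_prod -/(fd _ _) /D fold_mon ?enum_uniq // big_enum.
congr (_ *: mpolyX _ _); apply: mon_ext => r /=;
  rewrite /decr /ek_diag (mem_imset _ _ (@perm_inj _ s)) ?(mem_enum (mem S));
  by case: (r \in S).
Qed.
Lemma fact_split n (I : {set 'I_n}) (c : 'I_n -> nat * nat) :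
  ek_defined I c ->
  Defs.fact_prod c = (\prod_(t in I) (c t).1 * Defs.fact_prod (ek_diag I c))%N.
Proof.
move/forall_inP => hd; rewrite /Defs.fact_prod [X in (_ = X * _)%N]big_mkcond /= -big_split /=.
apply: eq_bigr => t _; rewrite /ek_diag; case: ifP => tI /=; last by rewrite mul1n.
have := hd t tI; case: ((c t).1) => // p _.
by rewrite factS /= mulnA.
Qed.

Lemma fact_prod_gt0 n (c : 'I_n -> nat * nat) : (0 < Defs.fact_prod c)%N.
Proof. by apply: prodn_gt0 => t; rewrite muln_gt0 !fact_gt0. Qed.

Lemma eps_prod n (I : {set 'I_n}) (c : 'I_n -> nat * nat) :
  ek_defined I c -> eps c (ek_diag I c) = (\prod_(t in I) (c t).1)%N%:R.
Proof.
move=> hd; rewrite /eps (fact_split hd) natrM mulfK //.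
by rewrite pnatr_eq0 -lt0n fact_prod_gt0.
Qed.

Lemma termE n (I : {set 'I_n}) (c : 'I_n -> nat * nat) :
  (if ek_defined I c then eps c (ek_diag I c) *: Delta (ek_diag I c) else 0)
  = (\prod_(t in I) (((c t).1)%:R : rat)) *: Delta (ek_diag I c).
Proof.
case: ifP => hd; first by rewrite eps_prod // natr_prod.
move/negbT: hd => /forall_inPn [t tI]; rewrite -leqNgt leqn0 => /eqP p0.
by rewrite (bigD1 t) //= p0 mul0r scale0r.
Qed.

Lemma dX_sum n (S : {set 'I_n}) (I : finType) (F : I -> {mpoly rat[n + n]}) :
  dX_prod S (\sum_i F i) = \sum_i dX_prod S (F i).
Proof. exact: fd_sum. Qed.

Lemma dX_scale n (S : {set 'I_n}) (x : rat) P : dX_prod S (x *: P) = x *: dX_prod S P.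
Proof. exact: fd_scale. Qed.

Theorem mainTheorem2 (n : nat) (c : 'I_n -> nat * nat) (k : nat) :
  listed_in_order c -> (1 <= k)%N ->
  ek_dX k (Delta c) =
    \sum_(I : {set 'I_n} | #|I| == k)
      (if ek_defined I c then eps c (ek_diag I c) *: Delta (ek_diag I c) else 0)
  /\
  (forall I : {set 'I_n}, #|I| = k -> ek_defined I c ->
     Delta (ek_diag I c) != 0 ->
     exists m : nat, (0 < m)%N /\ eps c (ek_diag I c) = m%:R).
Proof.
move=> _ _; split; last first.
  move=> I _ hd _; exists (\prod_(t in I) (c t).1)%N; split; last exact: eps_prod.
  by apply: prodn_cond_gt0 => t tI; move/forall_inP: hd; apply.
under [RHS]eq_bigr do rewrite termE.
rewrite /ek_dX DeltaE.
under [RHS]eq_bigr do rewrite DeltaE.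
transitivity (\sum_(S : {set 'I_n} | #|S| == k) \sum_(s : 'S_n) dX_prod S (((-1) ^+ s : rat) *: D c s)).
  by apply: eq_bigr => S _; exact: dX_sum.
under [RHS]eq_bigr do rewrite scaler_sumr.
rewrite exchange_big [RHS]exchange_big /=; apply: eq_bigr => s _.
rewrite [RHS](reindex (fun S : {set 'I_n} => [set s x | x in S])) /=; last first.
  apply: onW_bij; exists (fun S : {set 'I_n} => [set (s^-1)%g x | x in S]) => S.
    rewrite -imset_comp -[RHS]imset_id; apply: eq_imset => x /=; exact: permK.
  rewrite -imset_comp -[RHS]imset_id; apply: eq_imset => x /=; exact: permKV.
apply: eq_big => [S|S _]; first by rewrite card_imset //; exact: perm_inj.
rewrite dX_scale dX_D.
rewrite big_imset /=; last by move=> x y _ _; exact: perm_inj.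
by rewrite !scalerA mulrC.
Qed.
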